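(* Let $L\geq1$ be an integer, $P\geq0$, $p_B\in[0,1]$, and $\alpha\sim\mathrm{Binomial}(L,1-p_B)$. For integers $i\geq0$ let $$\bar R(i):=\mathbb{E}\Big[\log\Big(1+\Big|\textstyle\sum_{l=1}^i e^{j\theta_l}\Big|^2P\Big)\Big],$$ where $\theta_1,\theta_2,\ldots$ are i.i.d. $\mathrm{Uniform}(0,2\pi)$ (independent of $\alpha$; the expectation is over the $\theta_l$ only, so $\bar R$ is a deterministic function). Then $$\sup_{r\in\mathbb{R}}r\cdot\mathbb{P}\big(\bar R(\alpha)\geq r\big)=\max_{i\in\{1,\ldots,L\}}\mathbb{P}(\alpha\geq i)\,\bar R(i).$$
   Context: The left-hand side is the outage rate asymptotically (in the frame length) achievable by non-coherent joint transmission with phase diversity over a multi-point intermittent block fading channel with $L$ transmitters, each blocked independently with probability $p_B$. $\log$ is the logarithm in a fixed base. *)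

(* Defs.v *)
From Stdlib Require Import Reals Arith.
From Coquelicot Require Import Coquelicot.
Open Scope R_scope.

Definition logb (b x : R) : R := ln x / ln b.

(* Gfun b P i x y = E[ log_b (1 + |z + sum_{l=1}^i e^{j theta_l}|^2 P) ]
   with z = x + j y and theta_1..theta_i i.i.d. Uniform(0, 2 pi);
   the expectation is written as the iterated integral
   (1/(2 pi))^i int_0^{2pi} ... int_0^{2pi} ... d theta_i ... d theta_1. *)
Fixpoint Gfun (b P : R) (i : nat) (x y : R) : R :=
  match i with
  | O => logb b (1 + (x ^ 2 + y ^ 2) * P)
  | S n => / (2 * PI) *
      RInt (fun t => Gfun b P n (x + cos t) (y + sin t)) 0 (2 * PI)
  end.

Definition Rbar_rate (b P : R) (i : nat) : R := Gfun b P i 0 0.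

Definition binom_pmf (L : nat) (pB : R) (k : nat) : R :=
  Binomial.C L k * (1 - pB) ^ k * pB ^ (L - k).

Definition prob_alpha_ge (L : nat) (pB : R) (i : nat) : R :=
  sum_f_R0 (fun k => if Nat.leb i k then binom_pmf L pB k else 0) L.

Definition prob_rate_ge (b P : R) (L : nat) (pB : R) (r : R) : R :=
  sum_f_R0 (fun k => if Rle_dec r (Rbar_rate b P k) then binom_pmf L pB k else 0) L.

Fixpoint max_1_to (f : nat -> R) (n : nat) : R :=
  match n with
  | O => f 1%nat
  | S O => f 1%nat
  | S m => Rmax (max_1_to f m) (f n)
  end.

(* Main.v *)
Require Import Defs.
From Stdlib Require Import Reals Lra Lia Psatz.
From Coquelicot Require Import Coquelicot.
Open Scope R_scope.

Lemma exR (h : R -> R) a b : (forall t, continuous h t) -> ex_RInt h a b.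
Proof. intros H; apply (ex_RInt_continuous (V:=R_CompleteNormedModule)); intros; apply H. Qed.

Lemma RInt_shift (h : R -> R) (c d a b : R) : (forall t, continuous h t) ->
  RInt (fun t => h (t + c)) a b = RInt h (a + c) (b + c).
Proof.
  intros H.
  transitivity (RInt (fun y => scal 1 (h (1 * y + c))) a b).
  - apply RInt_ext. intros; change (scal 1 ?z) with (1 * z); rewrite Rmult_1_l; f_equal; ring.
  - rewrite (RInt_comp_lin (V:=R_CompleteNormedModule)). f_equal; ring. apply exR; auto.
Qed.

Lemma RInt_period (h : R -> R) (c : R) : (forall t, continuous h t) ->
  (forall t, h (t + 2*PI) = h t) ->
  RInt (fun t => h (t + c)) 0 (2*PI) = RInt h 0 (2*PI).
Proof.
  intros H Hp.
  rewrite (RInt_shift h c c); auto.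
  rewrite Rplus_0_l.
  rewrite <- (RInt_Chasles h c 0 (2*PI+c)) by (apply exR; auto).
  rewrite <- (RInt_Chasles h 0 (2*PI) (2*PI+c)) by (apply exR; auto).
  replace (RInt h (2*PI) (2*PI+c)) with (RInt h 0 c).
  - rewrite <- (opp_RInt_swap h c 0) by (apply exR; auto).
    repeat change (plus ?x ?y) with (x + y). change (opp ?x) with (- x). match goal with |- ?a = ?b => change (@eq R a b) end; ring.
  - transitivity (RInt (fun t => h (t + 2*PI)) 0 c).
    + apply RInt_ext; intros; symmetry; apply Hp.
    + rewrite (RInt_shift h (2*PI) (2*PI)); auto. f_equal; ring.
Qed.

Lemma RInt_double (h : R -> R) : (forall t, continuous h t) ->
  (forall t, h (t + 2*PI) = h t) ->
  RInt (fun t => h (2 * t)) 0 (2*PI) = RInt h 0 (2*PI).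
Proof.
  intros H Hp.
  assert (C2 : forall t, continuous (fun y => h (2*y)) t).
  { intro t. apply (@continuous_comp R_UniformSpace R_UniformSpace R_UniformSpace (fun y => 2*y) h).
    apply (ex_derive_continuous (K:=R_AbsRing) (V:=R_NormedModule)); auto_derive; auto. apply H. }
  assert (E : RInt (fun y => scal 2 (h (2 * y + 0))) 0 (2*PI) = RInt h (2*0+0) (2*(2*PI)+0)).
  { apply (RInt_comp_lin (V:=R_CompleteNormedModule)). apply exR; auto. }
  assert (E1 : RInt (fun y => scal 2 (h (2 * y + 0))) 0 (2*PI) = 2 * RInt (fun t => h (2 * t)) 0 (2*PI)).
  { transitivity (RInt (fun y => scal 2 (h (2 * y))) 0 (2*PI)).
    apply RInt_ext; intros; do 2 f_equal; ring.
    rewrite (RInt_scal (V:=R_CompleteNormedModule)). reflexivity. apply exR; auto. }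
  assert (E2 : RInt h (2*0+0) (2*(2*PI)+0) = RInt h 0 (2*PI) + RInt h (2*PI) (2*PI+2*PI)).
  { replace (2*0+0) with 0 by ring. replace (2*(2*PI)+0) with (2*PI + 2*PI) by ring.
    symmetry. apply (RInt_Chasles (V:=R_CompleteNormedModule)); apply exR; auto. }
  assert (E3 : RInt h (2*PI) (2*PI+2*PI) = RInt h 0 (2*PI)).
  { transitivity (RInt (fun t => h (t + 2*PI)) 0 (2*PI)).
    + rewrite (RInt_shift h (2*PI) (2*PI)); auto. f_equal; ring.
    + apply RInt_ext; intros; apply Hp. }
  rewrite E1, E2, E3 in E. change (2 * RInt (fun t => h (2 * t)) 0 (2 * PI) = RInt h 0 (2 * PI) + RInt h 0 (2 * PI)) in E. lra.
Qed.

Definition gA (A X Y t : R) := ln (A + X * cos t + Y * sin t).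

Lemma trig_bound X Y t : (X * cos t + Y * sin t)^2 <= X^2 + Y^2.
Proof.
  assert (H := sin2_cos2 t). unfold Rsqr in H.
  assert (E : (X * cos t + Y * sin t)^2 + (X * sin t - Y * cos t)^2 = X^2 + Y^2).
  { replace (X^2 + Y^2) with ((X^2+Y^2) * (sin t * sin t + cos t * cos t)) by (rewrite H; ring). ring. }
  assert (0 <= (X * sin t - Y * cos t)^2) by apply pow2_ge_0. lra.
Qed.

Lemma gA_pos A X Y t : 0 < A -> X^2 + Y^2 < A^2 -> 0 < A + X * cos t + Y * sin t.
Proof.
  intros HA H. assert (T := trig_bound X Y t).
  replace (A + X * cos t + Y * sin t) with (A + (X * cos t + Y * sin t)) by ring.
  set (u := X * cos t + Y * sin t) in *.
  destruct (Rle_dec 0 u); [lra|].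
  assert (u^2 < A^2) by lra.
  destruct (Rle_dec (A + u) 0); [|lra].
  exfalso. assert (A <= -u) by lra. assert (A*A <= (-u)*(-u)) by (apply Rmult_le_compat; lra). nra.
Qed.

Lemma gA_cont A X Y t : 0 < A -> X^2 + Y^2 < A^2 -> continuous (gA A X Y) t.
Proof.
  intros HA H. apply (ex_derive_continuous (K:=R_AbsRing) (V:=R_NormedModule)).
  unfold gA. auto_derive. apply gA_pos; auto.
Qed.

Lemma gA_per A X Y t : gA A X Y (t + 2*PI) = gA A X Y t.
Proof. unfold gA. rewrite cos_plus, sin_plus, cos_2PI, sin_2PI. f_equal; ring. Qed.

Lemma gA_half A X Y : 0 < A -> X^2 + Y^2 < A^2 ->
  RInt (gA A X Y) 0 (2*PI) =
  / 2 * RInt (gA (A^2 - (X^2+Y^2)/2) (-(X^2-Y^2)/2) (-(X*Y))) 0 (2*PI).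
Proof.
  intros HA H.
  set (A' := A^2 - (X^2+Y^2)/2). set (X' := -(X^2-Y^2)/2). set (Y' := -(X*Y)).
  assert (HA' : 0 < A'). { unfold A'. nra. }
  assert (H' : X'^2 + Y'^2 < A'^2).
  { assert (E0 : X'^2 + Y'^2 = ((X^2+Y^2)/2)^2) by (unfold X', Y'; field).
    rewrite E0. unfold A'. set (s := X^2+Y^2) in *. 
    assert (0 <= s) by (unfold s; nra).
    assert (s/2 < A^2 - s/2) by lra. 
    assert ((s/2)*(s/2) < (A^2 - s/2) * (A^2 - s/2)) by (apply Rmult_le_0_lt_compat; lra). lra. }
  assert (Cg : forall t, continuous (gA A X Y) t) by (intros; apply gA_cont; auto).
  assert (Cg' : forall t, continuous (gA A' X' Y') t) by (intros; apply gA_cont; auto).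
  assert (E1 : RInt (fun t => gA A X Y (t + PI)) 0 (2*PI) = RInt (gA A X Y) 0 (2*PI)).
  { apply RInt_period; auto. intros; apply gA_per. }
  assert (Cs : forall t, continuous (fun t => gA A X Y (t + PI)) t).
  { intros t. apply (@continuous_comp R_UniformSpace R_UniformSpace R_UniformSpace (fun y => y + PI) (gA A X Y)).
    apply (ex_derive_continuous (K:=R_AbsRing) (V:=R_NormedModule)); auto_derive; auto. apply Cg. }
  assert (E2 : RInt (fun t => gA A X Y t + gA A X Y (t + PI)) 0 (2*PI) =
               RInt (gA A X Y) 0 (2*PI) + RInt (fun t => gA A X Y (t + PI)) 0 (2*PI)).
  { apply (RInt_plus (V:=R_CompleteNormedModule)); apply exR; auto. }
  assert (E3 : RInt (fun t => gA A X Y t + gA A X Y (t + PI)) 0 (2*PI) =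
               RInt (fun t => gA A' X' Y' (2 * t)) 0 (2*PI)).
  { apply RInt_ext. intros t _. match goal with |- ?a = ?b => change (@eq R a b) end. unfold gA.
    rewrite <- ln_mult by (try apply gA_pos; auto;
       rewrite neg_cos, neg_sin; replace (A + X * - cos t + Y * - sin t) with (A + (-X) * cos t + (-Y) * sin t) by ring;
       apply gA_pos; auto; nra).
    f_equal. rewrite neg_cos, neg_sin, cos_2a, sin_2a.
    assert (HS := sin2_cos2 t). unfold Rsqr in HS. unfold A', X', Y'.
    replace ((X^2+Y^2)/2) with ((X^2+Y^2)/2 * (sin t * sin t + cos t * cos t)) by (rewrite HS; ring). field. }
  assert (E4 : RInt (fun t => gA A' X' Y' (2 * t)) 0 (2*PI) = RInt (gA A' X' Y') 0 (2*PI)).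
  { apply RInt_double; auto. intros; apply gA_per. }
  change (RInt (fun t : R => gA A X Y t + gA A X Y (t + PI)) 0 (2 * PI) =
     RInt (gA A X Y) 0 (2 * PI) + RInt (fun t : R => gA A X Y (t + PI)) 0 (2 * PI)) in E2.
  lra.
Qed.

Lemma ln_le' x y : 0 < x -> x <= y -> ln x <= ln y.
Proof. intros Hx [H|H]. left; apply ln_increasing; auto. subst; lra. Qed.

Lemma gA_bound (m : nat) : forall a b X Y, 0 <= b < a -> X^2 + Y^2 = (2*a*b)^2 ->
  2*PI * (2 / INR (2^m) * ln (a^(2^m) - b^(2^m))) <= RInt (gA (a^2+b^2) X Y) 0 (2*PI).
Proof.
  induction m as [|m IH]; intros a b X Y Hab HXY.
  - assert (HA : 0 < a^2 + b^2) by nra.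
    assert (HA2 : X^2 + Y^2 < (a^2+b^2)^2).
    { rewrite HXY. assert (0 < (a^2 - b^2)^2). { apply pow_lt. nra. } nra. }
    assert (Hc : RInt (fun _ => ln ((a-b)^2)) 0 (2*PI) <= RInt (gA (a^2+b^2) X Y) 0 (2*PI)).
    { apply RInt_le. assert (PI > 0) by apply PI_RGT_0. lra.
      apply exR. intros; apply continuous_const.
      apply exR. intros; apply gA_cont; auto.
      intros t _. unfold gA. apply ln_le'. apply pow_lt; lra.
      assert (T := trig_bound X Y t). rewrite HXY in T.
      replace (a ^ 2 + b ^ 2 + X * cos t + Y * sin t) with (a^2 + b^2 + (X * cos t + Y * sin t)) by ring.
      set (u := X * cos t + Y * sin t) in *.
      assert (-(2*a*b) <= u). { destruct (Rle_dec 0 u). nra.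
        assert ((-u)*(-u) <= (2*a*b)*(2*a*b)) by (replace ((-u)*(-u)) with (u^2) by ring; replace ((2*a*b)*(2*a*b)) with ((2*a*b)^2) by ring; lra).
        destruct (Rle_dec (-u) (2*a*b)) as [|n']; [lra|]. apply Rnot_le_lt in n'. assert ((2*a*b)*(2*a*b) < (-u)*(-u)).
        assert (0 <= 2*a*b) by (apply Rmult_le_pos; [apply Rmult_le_pos|]; lra).
        apply Rmult_le_0_lt_compat; lra. lra. }
      replace ((a-b)^2) with (a^2+b^2 - 2*a*b) by ring. lra. }
    rewrite RInt_const in Hc. change (scal ?x ?y) with (x * y) in Hc.
    rewrite ln_pow in Hc by lra. simpl INR in *. simpl pow in *.
    replace (a*1 - b*1) with (a - b) by ring. lra.
  - assert (HA : 0 < a^2 + b^2) by nra.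
    assert (HA2 : X^2 + Y^2 < (a^2+b^2)^2).
    { rewrite HXY. assert (0 < (a^2 - b^2)^2). { apply pow_lt. nra. } nra. }
    rewrite gA_half by auto.
    replace ((a ^ 2 + b ^ 2) ^ 2 - (X ^ 2 + Y ^ 2) / 2) with ((a^2)^2 + (b^2)^2) by (rewrite HXY; field).
    assert (IH' := IH (a^2) (b^2) (- (X ^ 2 - Y ^ 2) / 2) (- (X * Y))).
    assert (H1 : (- (X ^ 2 - Y ^ 2) / 2)^2 + (- (X * Y))^2 = (2 * a^2 * b^2)^2).
    { transitivity (((X^2+Y^2)/2)^2). field. rewrite HXY. field. }
    assert (H0 : 0 <= b^2 < a^2) by nra.
    specialize (IH' H0 H1).
    replace (2 ^ S m)%nat with (2 * 2^m)%nat by (simpl; lia).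
    rewrite !pow_mult, mult_INR. simpl (INR 2).
    assert (0 < INR (2^m)). { apply lt_0_INR. apply Nat.neq_0_lt_0. apply Nat.pow_nonzero. lia. }
    replace (2 / ((1+1) * INR (2 ^ m))) with (/2 * (2 / INR (2^m))) by (field; lra).
    set (K := 2 / INR (2 ^ m) * ln ((a ^ 2) ^ 2 ^ m - (b ^ 2) ^ 2 ^ m)) in *.
    eapply Rle_trans; [| apply Rmult_le_compat_l; [|exact IH']]; [right; unfold K; ring | lra].
Qed.

Lemma limit_arg (I c L : R) : L <= 0 -> (forall m : nat, c + 2 / INR (2^m) * L <= I) -> c <= I.
Proof.
  intros HL H. destruct (Rle_dec c I) as [|Hn]; auto. apply Rnot_le_lt in Hn.
  set (d := c - I). assert (Hd : 0 < d) by (unfold d; lra).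
  destruct (archimed_cor1 (d / (2 * (-L) + 1))) as [N [HN HN0]].
  { apply Rdiv_lt_0_compat; lra. }
  specialize (H N).
  assert (H2 : (N < 2^N)%nat) by (apply Nat.pow_gt_lin_r; lia).
  assert (HI : / INR (2^N) < / INR N).
  { apply Rinv_lt_contravar. apply Rmult_lt_0_compat; apply lt_0_INR; lia. apply lt_INR; lia. }
  assert (HI2 : / INR (2^N) < d / (2 * (-L) + 1)) by lra.
  assert (HP : 0 < / INR (2^N)) by (apply Rinv_0_lt_compat; apply lt_0_INR; lia).
  assert (E : 2 / INR (2^N) * L = - (2 * (-L)) * / INR (2^N)) by (unfold Rdiv; ring).
  rewrite E in H.
  assert (2 * (-L) * / INR (2^N) <= 2 * (-L) * (d / (2 * (-L) + 1))).
  { apply Rmult_le_compat_l; lra. }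
  assert (2 * (-L) * (d / (2 * (-L) + 1)) < d).
  { apply (Rmult_lt_reg_r (2 * (-L) + 1)). lra. field_simplify; try lra. }
  unfold d in *. lra.
Qed.

Lemma mean_ineq (P x y : R) : 0 <= P ->
  2*PI * ln (1 + (x^2+y^2)*P) <= RInt (fun t => ln (1 + ((x+cos t)^2 + (y+sin t)^2)*P)) 0 (2*PI).
Proof.
  intros HP.
  set (r2 := x^2+y^2). assert (Hr2 : 0 <= r2) by (unfold r2; nra).
  set (r := sqrt r2). assert (Hr : 0 <= r) by apply sqrt_pos.
  assert (Err : r * r = r2) by (apply sqrt_sqrt; auto).
  set (A := 1 + P*(r2+1)). set (rho := 2*P*r).
  assert (HAm : 0 < A - rho).
  { unfold A, rho. replace (1 + P * (r2 + 1) - 2 * P * r) with (1 + P * ((r-1)*(r-1))) by (rewrite <- Err; ring).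
    assert (0 <= P * ((r-1)*(r-1))) by (apply Rmult_le_pos; [lra | apply Rle_0_sqr]). lra. }
  assert (Hrho : 0 <= rho) by (unfold rho; apply Rmult_le_pos; lra).
  set (s1 := sqrt (A + rho)). set (s2 := sqrt (A - rho)).
  assert (E1 : s1 * s1 = A + rho) by (apply sqrt_sqrt; lra).
  assert (E2 : s2 * s2 = A - rho) by (apply sqrt_sqrt; lra).
  assert (Hs2 : 0 < s2) by (apply sqrt_lt_R0; lra).
  assert (Hs12 : s2 <= s1) by (apply sqrt_le_1_alt; lra).
  set (a := (s1+s2)/2). set (b := (s1-s2)/2).
  assert (Hab : 0 <= b < a) by (unfold a, b; lra).
  assert (EA : a^2 + b^2 = A) by (unfold a, b; field_simplify; nra).
  assert (Eab : 2*a*b = rho) by (unfold a, b; field_simplify; nra).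
  set (X := 2*P*x). set (Y := 2*P*y).
  assert (EXY : X^2 + Y^2 = (2*a*b)^2).
  { rewrite Eab. unfold X, Y, rho. replace ((2*P*r)^2) with (4*P^2*(r*r)) by ring. rewrite Err. unfold r2. ring. }
  assert (Eint : RInt (fun t => ln (1 + ((x+cos t)^2 + (y+sin t)^2)*P)) 0 (2*PI) = RInt (gA (a^2+b^2) X Y) 0 (2*PI)).
  { apply RInt_ext. intros t _. match goal with |- ?u = ?v => change (@eq R u v) end.
    unfold gA. f_equal. rewrite EA. unfold A, X, Y, r2.
    assert (HS := sin2_cos2 t). unfold Rsqr in HS.
    replace (P * (x ^ 2 + y ^ 2 + 1)) with (P * (x ^ 2 + y ^ 2 + (sin t * sin t + cos t * cos t))) by (rewrite HS; ring).
    ring. }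
  rewrite Eint.
  assert (Ha2 : 1 + r2 * P <= a^2).
  { set (w := 1 + P*r2 - P).
    assert (Hprod : (s1*s2)*(s1*s2) = w*w + 4*P).
    { replace ((s1*s2)*(s1*s2)) with ((s1*s1)*(s2*s2)) by ring. rewrite E1, E2.
      unfold w, A, rho. replace ((1 + P * (r2 + 1) + 2 * P * r) * (1 + P * (r2 + 1) - 2 * P * r))
        with ((1 + P * (r2 + 1))^2 - 4*P^2*(r*r)) by ring. rewrite Err. ring. }
    assert (Hw : w <= s1 * s2).
    { destruct (Rle_dec w (s1*s2)); auto. exfalso. apply Rnot_le_lt in n.
      assert (0 <= s1 * s2) by (apply Rmult_le_pos; lra).
      assert ((s1*s2)*(s1*s2) < w * w) by (apply Rmult_le_0_lt_compat; lra). nra. }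
    replace (a^2) with ((s1*s1 + s2*s2 + 2*(s1*s2))/4) by (unfold a; field).
    rewrite E1, E2. unfold w, A in *. lra. }
  assert (Ha : 0 < a) by lra.
  set (q := b / a).
  assert (Hq : 0 <= q < 1).
  { unfold q. split. apply Rdiv_le_0_compat; lra. apply (Rmult_lt_reg_r a); auto. field_simplify; lra. }
  assert (HL : ln (1 - q) <= 0).
  { rewrite <- ln_1. apply ln_le'; lra. }
  assert (Hln : ln (1 + r2 * P) <= 2 * ln a).
  { replace (2 * ln a) with (ln (a^2)). apply ln_le'; auto. nra.
    rewrite ln_pow by auto. simpl INR. ring. }
  enough (2 * PI * (2 * ln a) <= RInt (gA (a ^ 2 + b ^ 2) X Y) 0 (2 * PI)).
  { assert (PI > 0) by apply PI_RGT_0. 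
    assert (2*PI*ln (1 + r2 * P) <= 2*PI*(2*ln a)) by (apply Rmult_le_compat_l; lra). lra. }
  apply (limit_arg _ _ (2*PI*ln (1-q))).
  { assert (PI > 0) by apply PI_RGT_0. 
    assert (0 <= 2*PI) by lra. 
    replace 0 with (2*PI*0) by ring. apply Rmult_le_compat_l; auto. }
  intro m. eapply Rle_trans; [| apply (gA_bound m a b X Y Hab EXY)].
  set (N := (2^m)%nat).
  assert (HN : (1 <= N)%nat) by (unfold N; apply Nat.le_succ_l; apply Nat.neq_0_lt_0; apply Nat.pow_nonzero; lia).
  assert (HNr : 0 < INR N) by (apply lt_0_INR; lia).
  assert (HqN : q^N <= q).
  { destruct N as [|N']. lia. simpl. 
    assert (q^N' <= 1) by (rewrite <- (pow1 N'); apply pow_incr; lra). assert (0 <= q^N') by (apply pow_le; lra). nra. }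
  assert (Eb : b = q * a) by (unfold q; field; lra).
  assert (Ediff : a^N - b^N = a^N * (1 - q^N)) by (rewrite Eb, Rpow_mult_distr; ring).
  assert (HaN : 0 < a^N) by (apply pow_lt; auto).
  assert (Hlow : INR N * ln a + ln (1-q) <= ln (a^N - b^N)).
  { rewrite Ediff, ln_mult by (auto; lra). rewrite ln_pow by auto.
    assert (ln (1-q) <= ln (1 - q^N)) by (apply ln_le'; lra). lra. }
  assert (E2N : 2 / INR N * (INR N * ln a) = 2 * ln a) by (field; lra).
  assert (2 * ln a + 2 / INR N * ln (1-q) <= 2 / INR N * ln (a^N - b^N)).
  { rewrite <- E2N. rewrite <- Rmult_plus_distr_l. apply Rmult_le_compat_l.
    apply Rlt_le, Rdiv_lt_0_compat; lra. lra. }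
  assert (PI > 0) by apply PI_RGT_0.
  replace (2 * PI * (2 * ln a) + 2 / INR N * (2 * PI * ln (1 - q))) with
    (2*PI * (2 * ln a + 2 / INR N * ln (1 - q))) by ring.
  apply Rmult_le_compat_l; lra.
Qed.

Lemma ln1p_le u : 0 <= u -> ln (1 + u) <= u.
Proof.
  intros Hu. destruct (Req_dec u 0) as [->|Hn].
  - rewrite Rplus_0_r, ln_1. lra.
  - rewrite <- (ln_exp u) at 2. apply ln_le'. lra. left; apply exp_ineq1; auto.
Qed.

Lemma ln_lip1 P r s : 0 <= P -> 0 <= s <= r ->
  ln (1 + P * r^2) - ln (1 + P * s^2) <= 2 * sqrt P * (r - s).
Proof.
  intros HP Hsr. set (d := r - s). set (k := sqrt P).
  assert (Hk : 0 <= k) by apply sqrt_pos. assert (Ek : k * k = P) by (apply sqrt_sqrt; auto).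
  assert (Hd : 0 <= d) by (unfold d; lra).
  assert (H1 : 0 < 1 + P * s^2) by nra.
  assert (H2 : 1 + P * r^2 <= (1 + P * s^2) * ((1 + k * d)^2)).
  { replace r with (s + d) by (unfold d; ring). rewrite <- Ek.
    assert (0 <= k*s) by nra.
    assert (k*s <= 1 + (k*s)^2) by nra.
    assert (0 <= k * d * (1 + (k*s)^2 - k*s)) by (apply Rmult_le_pos; nra). nra. }
  assert (H3 : ln (1 + P * r^2) <= ln (1 + P * s^2) + 2 * ln (1 + k * d)).
  { replace (2 * ln (1 + k*d)) with (ln ((1 + k*d)^2)) by (rewrite ln_pow by nra; simpl INR; ring).
    rewrite <- ln_mult by nra. apply ln_le'; nra. }
  assert (ln (1 + k * d) <= k * d) by (apply ln1p_le; nra). lra.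
Qed.

Lemma norm_lip x y x' y' :
  sqrt (x^2 + y^2) <= sqrt (x'^2 + y'^2) + (Rabs (x - x') + Rabs (y - y')).
Proof.
  set (r' := sqrt (x'^2 + y'^2)). set (D := Rabs (x - x') + Rabs (y - y')).
  assert (Hr : 0 <= r') by apply sqrt_pos.
  assert (Er : r' * r' = x'^2 + y'^2) by (apply sqrt_sqrt; nra).
  assert (HD : 0 <= D) by (unfold D; assert (0 <= Rabs (x - x')) by apply Rabs_pos; assert (0 <= Rabs (y-y')) by apply Rabs_pos; lra).
  rewrite <- (sqrt_square (r' + D)) by lra. apply sqrt_le_1_alt.
  assert (Ax : x' * (x - x') <= r' * Rabs (x - x')).
  { assert (Rabs x' <= r').
    { apply Rsqr_incr_0_var. unfold Rsqr. rewrite <- Rabs_mult, Rabs_pos_eq by nra. nra. auto. }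
    assert (x' * (x - x') <= Rabs x' * Rabs (x - x')).
    { rewrite <- Rabs_mult. apply Rle_abs. }
    assert (0 <= Rabs (x - x')) by apply Rabs_pos. nra. }
  assert (Ay : y' * (y - y') <= r' * Rabs (y - y')).
  { assert (Rabs y' <= r').
    { apply Rsqr_incr_0_var. unfold Rsqr. rewrite <- Rabs_mult, Rabs_pos_eq by nra. nra. auto. }
    assert (y' * (y - y') <= Rabs y' * Rabs (y - y')).
    { rewrite <- Rabs_mult. apply Rle_abs. }
    assert (0 <= Rabs (y - y')) by apply Rabs_pos. nra. }
  assert (Sx : (x - x')^2 = Rabs (x - x') * Rabs (x - x')) by (rewrite <- pow2_abs; ring).
  assert (Sy : (y - y')^2 = Rabs (y - y') * Rabs (y - y')) by (rewrite <- pow2_abs; ring).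
  replace (x^2 + y^2) with (x'^2 + y'^2 + 2 * (x' * (x - x')) + 2 * (y' * (y - y')) + (x-x')^2 + (y-y')^2) by ring.
  rewrite Sx, Sy, <- Er. unfold D.
  assert (0 <= Rabs (x - x')) by apply Rabs_pos. assert (0 <= Rabs (y - y')) by apply Rabs_pos. nra.
Qed.

Definition LipK (K : R) (f : R -> R -> R) :=
  forall x y x' y', Rabs (f x y - f x' y') <= K * (Rabs (x - x') + Rabs (y - y')).

Lemma Gfun0_lip b P : 1 < b -> 0 <= P -> LipK (2 * sqrt P / ln b) (Gfun b P 0).
Proof.
  intros Hb HP x y x' y'. change (Rabs (logb b (1 + (x^2+y^2)*P) - logb b (1 + (x'^2+y'^2)*P)) <= 2 * sqrt P / ln b * (Rabs (x - x') + Rabs (y - y'))). unfold logb.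
  assert (Hlb : 0 < ln b) by (rewrite <- ln_1; apply ln_increasing; lra).
  set (D := Rabs (x - x') + Rabs (y - y')).
  assert (Gen : forall x y x' y', ln (1 + (x^2+y^2)*P) - ln (1 + (x'^2+y'^2)*P) <= 2 * sqrt P * (Rabs (x - x') + Rabs (y - y'))).
  { clear x y x' y' D. intros x y x' y'.
    set (r := sqrt (x^2+y^2)). set (s := sqrt (x'^2+y'^2)).
    assert (Er : r^2 = x^2+y^2) by (unfold r; rewrite pow2_sqrt; nra).
    assert (Es : s^2 = x'^2+y'^2) by (unfold s; rewrite pow2_sqrt; nra).
    assert (Hs : 0 <= s) by apply sqrt_pos. assert (Hr : 0 <= r) by apply sqrt_pos.
    assert (Hk : 0 <= sqrt P) by apply sqrt_pos.
    rewrite <- Er, <- Es. rewrite (Rmult_comm (r^2)), (Rmult_comm (s^2)).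
    destruct (Rle_dec s r).
    - assert (H := ln_lip1 P r s HP (conj Hs r0)).
      assert (r - s <= Rabs (x - x') + Rabs (y - y')) by (assert (T := norm_lip x y x' y'); fold r s in T; lra).
      assert (2 * sqrt P * (r - s) <= 2 * sqrt P * (Rabs (x - x') + Rabs (y - y'))) by (apply Rmult_le_compat_l; lra).
      lra.
    - assert (ln (1 + P * r^2) <= ln (1 + P * s^2)).
      { apply ln_le'. nra. assert (r^2 <= s^2) by nra. nra. }
      assert (0 <= Rabs (x - x')) by apply Rabs_pos. assert (0 <= Rabs (y - y')) by apply Rabs_pos.
      assert (0 <= 2 * sqrt P * (Rabs (x - x') + Rabs (y - y'))) by (apply Rmult_le_pos; lra). lra. }
  assert (G1 := Gen x y x' y'). assert (G2 := Gen x' y' x y).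
  rewrite (Rabs_minus_sym x' x), (Rabs_minus_sym y' y) in G2. fold D in G1, G2.
  unfold Rdiv. rewrite <- Rmult_minus_distr_r.
  rewrite Rabs_mult, (Rabs_pos_eq (/ ln b)) by (left; apply Rinv_0_lt_compat; auto).
  replace (2 * sqrt P * / ln b * D) with ((2 * sqrt P * D) * / ln b) by ring.
  apply Rmult_le_compat_r. left; apply Rinv_0_lt_compat; auto.
  apply Rabs_le. lra.
Qed.

Lemma lip_cont K f x y t0 : 0 <= K -> LipK K f ->
  continuous (fun t => f (x + cos t) (y + sin t)) t0.
Proof.
  intros HK Hf. apply filterlim_locally. intros eps.
  assert (He : 0 < eps / (2*K+2)) by (apply Rdiv_lt_0_compat; [apply cond_pos|lra]).
  set (e' := mkposreal _ He).
  assert (Cc : continuous cos t0) by (apply (ex_derive_continuous (K:=R_AbsRing) (V:=R_NormedModule)); auto_derive; auto).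
  assert (Cs : continuous sin t0) by (apply (ex_derive_continuous (K:=R_AbsRing) (V:=R_NormedModule)); auto_derive; auto).
  apply filterlim_locally with (eps := e') in Cc.
  apply filterlim_locally with (eps := e') in Cs.
  generalize (filter_and _ _ Cc Cs). apply filter_imp. intros t [H1 H2].
  change (Rabs (cos t - cos t0) < e') in H1. change (Rabs (sin t - sin t0) < e') in H2.
  change (Rabs (f (x + cos t) (y + sin t) - f (x + cos t0) (y + sin t0)) < eps).
  eapply Rle_lt_trans. apply Hf.
  replace (x + cos t - (x + cos t0)) with (cos t - cos t0) by ring.
  replace (y + sin t - (y + sin t0)) with (sin t - sin t0) by ring.
  simpl in H1, H2.
  assert (K * (Rabs (cos t - cos t0) + Rabs (sin t - sin t0)) <= K * (2 * (eps / (2*K+2)))).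
  { apply Rmult_le_compat_l; lra. }
  assert (K * (2 * (eps / (2*K+2))) < eps).
  { assert (0 < eps) by apply cond_pos.
    replace (K * (2 * (eps / (2*K+2)))) with (eps * (2*K / (2*K+2))) by (field; lra).
    assert (2*K / (2*K+2) < 1). { apply (Rmult_lt_reg_r (2*K+2)). lra. field_simplify; lra. }
    assert (eps * (2 * K / (2 * K + 2)) < eps * 1) by (apply Rmult_lt_compat_l; lra). lra. }
  lra.
Qed.

Lemma Gfun_lip b P : 1 < b -> 0 <= P -> forall n, LipK (2 * sqrt P / ln b) (Gfun b P n).
Proof.
  intros Hb HP. set (K := 2 * sqrt P / ln b).
  assert (HK : 0 <= K).
  { unfold K. assert (0 < ln b) by (rewrite <- ln_1; apply ln_increasing; lra).
    apply Rdiv_le_0_compat; auto. assert (0 <= sqrt P) by apply sqrt_pos. lra. }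
  assert (HPI : 0 < PI) by apply PI_RGT_0.
  induction n as [|n IH].
  - apply Gfun0_lip; auto.
  - intros x y x' y'. simpl Gfun.
    set (g := fun t => Gfun b P n (x + cos t) (y + sin t)).
    set (g' := fun t => Gfun b P n (x' + cos t) (y' + sin t)).
    assert (Eg : ex_RInt g 0 (2*PI)) by (apply exR; intro; apply lip_cont with K; auto).
    assert (Eg' : ex_RInt g' 0 (2*PI)) by (apply exR; intro; apply lip_cont with K; auto).
    rewrite <- Rmult_minus_distr_l.
    assert (E := RInt_minus (V:=R_CompleteNormedModule) g g' 0 (2*PI) Eg Eg').
    change (RInt (fun x => g x - g' x) 0 (2*PI) = RInt g 0 (2*PI) - RInt g' 0 (2*PI)) in E.
    rewrite <- E.
    assert (B := abs_RInt_le_const (fun t => g t - g' t) 0 (2*PI) (K * (Rabs (x - x') + Rabs (y - y')))).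
    assert (Hle : Rabs (RInt (fun t => g t - g' t) 0 (2 * PI)) <= (2*PI - 0) * (K * (Rabs (x - x') + Rabs (y - y')))).
    { apply B. lra. apply (ex_RInt_minus (V:=R_NormedModule)); auto.
      intros t _. unfold g, g'. eapply Rle_trans. apply IH. right. f_equal. f_equal; f_equal; ring. }
    rewrite Rabs_mult, Rabs_pos_eq by (left; apply Rinv_0_lt_compat; lra).
    apply (Rmult_le_reg_l (2*PI)). lra.
    rewrite <- Rmult_assoc, Rinv_r, Rmult_1_l by lra. lra.
Qed.

Lemma Gfun_mono b P : 1 < b -> 0 <= P -> forall n x y, Gfun b P n x y <= Gfun b P (S n) x y.
Proof.
  intros Hb HP. set (K := 2 * sqrt P / ln b).
  assert (Hlb : 0 < ln b) by (rewrite <- ln_1; apply ln_increasing; lra).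
  assert (HK : 0 <= K).
  { unfold K. apply Rdiv_le_0_compat; auto. assert (0 <= sqrt P) by apply sqrt_pos. lra. }
  assert (HPI : 0 < PI) by apply PI_RGT_0.
  intro n. induction n as [|n IH]; intros x y.
  - change (logb b (1 + (x^2+y^2)*P) <= / (2*PI) * RInt (fun t => logb b (1 + ((x + cos t)^2 + (y + sin t)^2)*P)) 0 (2*PI)).
    set (h := fun t => ln (1 + ((x + cos t)^2 + (y + sin t)^2)*P)).
    assert (Ch : forall t, continuous h t).
    { intro t. apply (ex_derive_continuous (K:=R_AbsRing) (V:=R_NormedModule)). unfold h. auto_derive.
      assert (0 <= ((x + cos t) ^ 2 + (y + sin t) ^ 2) * P) by (apply Rmult_le_pos; [apply Rplus_le_le_0_compat; apply pow2_ge_0 | lra]). lra. }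
    assert (E : RInt (fun t => logb b (1 + ((x + cos t)^2 + (y + sin t)^2)*P)) 0 (2*PI) = / ln b * RInt h 0 (2*PI)).
    { rewrite <- (RInt_scal (V:=R_CompleteNormedModule)) by (apply exR; auto).
      apply RInt_ext. intros t _. unfold logb, h. change (scal (/ ln b) ?z) with (/ ln b * z).
      match goal with |- ?u = ?v => change (@eq R u v) end. unfold Rdiv; ring. }
    rewrite E. assert (M := mean_ineq P x y HP). fold h in M. unfold logb.
    assert (Gen : forall I : R, 2*PI * ln (1 + (x ^ 2 + y ^ 2) * P) <= I ->
       ln (1 + (x ^ 2 + y ^ 2) * P) / ln b <= / (2 * PI) * (/ ln b * I)).
    { intros I HI. apply (Rmult_le_reg_l (2*PI * ln b)). nra.
      replace (2 * PI * ln b * (ln (1 + (x ^ 2 + y ^ 2) * P) / ln b)) with (2*PI * ln (1 + (x ^ 2 + y ^ 2) * P)) by (field; lra).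
      replace (2 * PI * ln b * (/ (2 * PI) * (/ ln b * I))) with I by (field; lra).
      exact HI. }
    apply Gen. exact M.
  - change (/ (2*PI) * RInt (fun t => Gfun b P n (x + cos t) (y + sin t)) 0 (2*PI) <=
            / (2*PI) * RInt (fun t => Gfun b P (S n) (x + cos t) (y + sin t)) 0 (2*PI)).
    apply Rmult_le_compat_l. left; apply Rinv_0_lt_compat; lra.
    apply RInt_le. lra.
    apply exR; intro; apply lip_cont with K; auto; apply Gfun_lip; auto.
    apply exR; intro; apply lip_cont with K; auto; apply Gfun_lip; auto.
    intros t _. apply IH.
Qed.

Lemma Rb_mono b P : 1 < b -> 0 <= P -> forall i j, (i <= j)%nat -> Rbar_rate b P i <= Rbar_rate b P j.
Proof.
  intros Hb HP i j Hij. induction Hij. lra.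
  eapply Rle_trans. apply IHHij. unfold Rbar_rate. apply Gfun_mono; auto.
Qed.

Lemma Rb_0 b P : Rbar_rate b P 0 = 0.
Proof.
  unfold Rbar_rate. simpl. unfold logb.
  replace (1 + (0 * (0 * 1) + 0 * (0 * 1)) * P) with 1 by ring. rewrite ln_1. unfold Rdiv; ring.
Qed.

Lemma Rb_nonneg b P i : 1 < b -> 0 <= P -> 0 <= Rbar_rate b P i.
Proof. intros. rewrite <- (Rb_0 b P). apply Rb_mono; auto; lia. Qed.

Lemma pmf_nonneg L pB k : 0 <= pB <= 1 -> 0 <= binom_pmf L pB k.
Proof.
  intros H. unfold binom_pmf. apply Rmult_le_pos; [apply Rmult_le_pos|].
  - unfold Binomial.C. apply Rdiv_le_0_compat. left; apply INR_fact_lt_0.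
    apply Rmult_lt_0_compat; apply INR_fact_lt_0.
  - apply pow_le; lra.
  - apply pow_le; lra.
Qed.

Lemma pa_nonneg L pB i : 0 <= pB <= 1 -> 0 <= prob_alpha_ge L pB i.
Proof.
  intros H. unfold prob_alpha_ge. apply cond_pos_sum. intro k.
  destruct (Nat.leb i k). apply pmf_nonneg; auto. lra.
Qed.

Lemma pr_nonneg b P L pB r : 0 <= pB <= 1 -> 0 <= prob_rate_ge b P L pB r.
Proof.
  intros H. unfold prob_rate_ge. apply cond_pos_sum. intro k.
  destruct (Rle_dec r (Rbar_rate b P k)). apply pmf_nonneg; auto. lra.
Qed.

Lemma max_ge f n i : (1 <= i <= n)%nat -> f i <= max_1_to f n.
Proof.
  induction n as [|n IH]; intros Hi. lia.
  destruct n as [|n'].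
  - simpl. replace i with 1%nat by lia. lra.
  - change (max_1_to f (S (S n'))) with (Rmax (max_1_to f (S n')) (f (S (S n')))).
    destruct (Nat.eq_dec i (S (S n'))) as [->|Hne].
    + apply Rmax_r.
    + eapply Rle_trans; [apply IH; lia | apply Rmax_l].
Qed.

Lemma max_le f n u : (1 <= n)%nat -> (forall i, (1 <= i <= n)%nat -> f i <= u) -> max_1_to f n <= u.
Proof.
  induction n as [|n IH]; intros Hn H. lia.
  destruct n as [|n'].
  - simpl. apply H; lia.
  - change (max_1_to f (S (S n'))) with (Rmax (max_1_to f (S n')) (f (S (S n')))).
    apply Rmax_lub. apply IH. lia. intros; apply H; lia. apply H; lia.
Qed.

Lemma first_idx (Pd : nat -> Prop) (dec : forall k, {Pd k} + {~ Pd k}) n :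
  (forall k, (k <= n)%nat -> ~ Pd k) \/ exists i, (i <= n)%nat /\ Pd i /\ forall k, (k < i)%nat -> ~ Pd k.
Proof.
  induction n as [|n IH].
  - destruct (dec 0%nat). right; exists 0%nat; repeat split; auto; intros; lia.
    left; intros k Hk; replace k with 0%nat by lia; auto.
  - destruct IH as [H|[i [Hi [Pi Hk]]]].
    + destruct (dec (S n)).
      * right; exists (S n); repeat split; auto. intros k Hk; apply H; lia.
      * left; intros k Hk. destruct (Nat.eq_dec k (S n)) as [->|]; auto. apply H; lia.
    + right; exists i; repeat split; auto.
Qed.

Lemma sum_zero n : sum_f_R0 (fun _ => 0) n = 0.
Proof. rewrite sum_cte. ring. Qed.

Theorem proposition6 (b : R) (L : nat) (P pB : R) :
  1 < b -> (1 <= L)%nat -> 0 <= P -> 0 <= pB <= 1 ->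
  is_lub (fun v => exists r : R, v = r * prob_rate_ge b P L pB r)
         (max_1_to (fun i => prob_alpha_ge L pB i * Rbar_rate b P i) L).
Proof.
  intros Hb HL HP HpB.
  set (F := fun i => prob_alpha_ge L pB i * Rbar_rate b P i).
  assert (HF1 : 0 <= F 1%nat) by (unfold F; apply Rmult_le_pos; [apply pa_nonneg | apply Rb_nonneg]; auto).
  assert (HM : F 1%nat <= max_1_to F L) by (apply max_ge; lia).
  split.
  - intros v [r ->].
    assert (Hpr := pr_nonneg b P L pB r HpB).
    destruct (Rle_dec r 0) as [Hr|Hr].
    + assert (r * prob_rate_ge b P L pB r <= 0) by (apply Rmult_le_0_r; auto). lra.
    + apply Rnot_le_lt in Hr.
      destruct (first_idx (fun k => r <= Rbar_rate b P k) (fun k => Rle_dec r (Rbar_rate b P k)) L)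
        as [H|[i [Hi [Pi Hk]]]].
      * assert (E : prob_rate_ge b P L pB r = 0).
        { unfold prob_rate_ge. transitivity (sum_f_R0 (fun _ => 0) L); [| apply sum_zero]. apply sum_eq. intros k Hk.
          cbv beta. destruct (Rle_dec r (Rbar_rate b P k)) as [c|]; [exfalso; apply (H k Hk c) | reflexivity]. }
        rewrite E. lra.
      * assert (Hi1 : (1 <= i)%nat).
        { destruct i. rewrite Rb_0 in Pi. lra. lia. }
        assert (E : prob_rate_ge b P L pB r = prob_alpha_ge L pB i).
        { unfold prob_rate_ge, prob_alpha_ge. apply sum_eq. intros k Hk'.
          destruct (Nat.leb i k) eqn:Ek.
          - apply Nat.leb_le in Ek. destruct (Rle_dec r (Rbar_rate b P k)) as [|n]; auto.
            exfalso; apply n. eapply Rle_trans. apply Pi. apply Rb_mono; auto.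
          - apply Nat.leb_gt in Ek. destruct (Rle_dec r (Rbar_rate b P k)) as [c|]; auto.
            exfalso; apply (Hk k Ek c). }
        rewrite E.
        assert (Hpa := pa_nonneg L pB i HpB).
        assert (r * prob_alpha_ge L pB i <= F i).
        { unfold F. rewrite Rmult_comm. apply Rmult_le_compat_l; auto. }
        assert (F i <= max_1_to F L) by (apply max_ge; lia). lra.
  - intros u Hu. apply max_le; auto. intros i Hi.
    assert (Hle : prob_alpha_ge L pB i <= prob_rate_ge b P L pB (Rbar_rate b P i)).
    { unfold prob_alpha_ge, prob_rate_ge. apply sum_Rle. intros k Hk.
      destruct (Nat.leb i k) eqn:Ek.
      - apply Nat.leb_le in Ek. destruct (Rle_dec (Rbar_rate b P i) (Rbar_rate b P k)) as [|n]. lra.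
        exfalso; apply n. apply Rb_mono; auto.
      - destruct (Rle_dec (Rbar_rate b P i) (Rbar_rate b P k)). apply pmf_nonneg; auto. lra. }
    assert (HR := Rb_nonneg b P i Hb HP).
    unfold F. eapply Rle_trans; [| apply Hu; exists (Rbar_rate b P i); reflexivity].
    rewrite Rmult_comm. apply Rmult_le_compat_l; auto.
Qed.
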